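(* Fix integers $n$ and $t$ with $n\ge 4$ and $3\le t\le n-1$. If $G$ is an $n$-vertex graph with minimum degree at least $1$ and $G\neq K_{1,n-1}$, then $i_t(G)<i_t(K_{1,n-1})$.
   Context: Graphs are simple, loopless and finite. $i_t(G)$ denotes the number of independent sets of size $t$ in $G$. $K_{1,n-1}$ is the star on $n$ vertices. *)

(* Defs.v *)
From mathcomp Require Import all_boot.
Set Implicit Arguments. Unset Strict Implicit. Unset Printing Implicit Defensive.

Definition simple_graph (n : nat) (e : rel 'I_n) : Prop :=
  symmetric e /\ irreflexive e.

Definition independent (n : nat) (e : rel 'I_n) (S : {set 'I_n}) : bool :=
  [forall x in S, forall y in S, ~~ e x y].

Definition indep_count (n : nat) (e : rel 'I_n) (t : nat) : nat :=
  #|[set S : {set 'I_n} | independent e S && (#|S| == t)]|.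

Definition degree (n : nat) (e : rel 'I_n) (v : 'I_n) : nat := #|[set w | e v w]|.

Definition star_rel (n : nat) : rel 'I_n.+1 :=
  fun x y => (x != y) && ((x == ord0) || (y == ord0)).

Definition graph_iso (n : nat) (e1 e2 : rel 'I_n) : Prop :=
  exists f : 'I_n -> 'I_n, bijective f /\ forall x y, e1 x y = e2 (f x) (f y).

(* Main.v *)
Require Import Defs.
From mathcomp Require Import all_boot zify perm.
Set Implicit Arguments. Unset Strict Implicit. Unset Printing Implicit Defensive.

Definition Ic N (e : rel 'I_N) (U : {set 'I_N}) t :=
  #|[set S : {set 'I_N} | [&& S \subset U, independent e S & #|S| == t]]|.

Definition dlt N (e : rel 'I_N) (U : {set 'I_N}) := [forall x in U, [exists y in U, e x y]].

Lemma indepP N (e : rel 'I_N) (S : {set 'I_N}) :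
  reflect (forall x y, x \in S -> y \in S -> ~~ e x y) (independent e S).
Proof.
apply: (iffP forall_inP) => H.
  by move=> x y xS yS; exact: (forall_inP (H x xS)) y yS.
by move=> x xS; apply/forall_inP => y yS; exact: H.
Qed.

Lemma I_le N (e : rel 'I_N) (U : {set 'I_N}) t : Ic e U t <= 'C(#|U|, t).
Proof.
rewrite -cards_draws; apply: subset_leq_card; apply/subsetP => S.
by rewrite !inE => /and3P[-> _ ->].
Qed.

Lemma I_lt N (e : rel 'I_N) (irr : irreflexive e) (U : {set 'I_N}) t a b :
  a \in U -> b \in U -> e a b -> 2 <= t <= #|U| -> Ic e U t < 'C(#|U|, t).
Proof.
move=> aU bU eab /andP[t2 tU].
have ab : a != b by apply/eqP => E; rewrite E irr in eab.
have sab : [set a; b] \subset U by apply/subsetP => w; rewrite !inE => /orP[]/eqP->.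
have cD : #|U :\: [set a; b]| = #|U| - 2.
  by rewrite cardsD (setIidPr sab) cards2 ab.
have : 0 < 'C(#|U :\: [set a; b]|, t - 2) by rewrite bin_gt0 cD; lia.
rewrite -cards_draws card_gt0 => /set0Pn [A]; rewrite inE => /andP[sA /eqP cA].
rewrite -cards_draws; apply: proper_card; apply/properP; split.
  apply/subsetP => S; rewrite !inE => /and3P[-> _ ->] //.
exists (A :|: [set a; b]).
  rewrite !inE; apply/andP; split.
    by rewrite subUset sab (subset_trans sA) // subsetDl.
  rewrite cardsU cA cards2 ab.
  have -> : A :&: [set a; b] = set0.
    apply/setP => w; rewrite !inE; apply/negbTE; apply/negP => /andP[wA wab].
    by move: (subsetP sA w wA); rewrite !inE wab.
  by rewrite cards0; apply/eqP; lia.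
rewrite !inE; apply/negP => /and3P[_ /indepP H _].
by have := H a b; rewrite !inE !eqxx !orbT eab => /(_ isT isT).
Qed.

Lemma I_del N (e : rel 'I_N) (sym : symmetric e) (irr : irreflexive e)
  (U : {set 'I_N}) c t : c \in U ->
  Ic e U t.+1 = Ic e (U :\ c) t.+1 + Ic e (U :\: (c |: [set y | e c y])) t.
Proof.
move=> cU; set W := U :\: (c |: _).
rewrite /Ic -(cardsID [set S : {set 'I_N} | c \in S]) addnC; congr (_ + _).
  apply: eq_card => S; rewrite !inE subsetD1.
  by case: (c \in S); rewrite ?andbF ?andbT //= andbC -!andbA.
set F' := [set S : {set 'I_N} | [&& S \subset W, _ & _]].
have cW : c \notin W by rewrite !inE eqxx.
have inj : {in F' &, injective (fun B => c |: B)}.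
  move=> B1 B2; rewrite !inE => /and3P[s1 _ _] /and3P[s2 _ _] E.
  have n1 : c \notin B1 by exact: (contra (subsetP s1 c) cW).
  have n2 : c \notin B2 by exact: (contra (subsetP s2 c) cW).
  by rewrite -(setU1K n1) -(setU1K n2) E.
rewrite -(card_in_imset inj); apply: eq_card => S; rewrite !inE.
apply/andP/imsetP.
  case=> /and3P[sU /indepP iS /eqP cS] cS'.
  exists (S :\ c); last by rewrite setD1K.
  rewrite !inE; apply/and3P; split.
  - apply/subsetP => y; rewrite !inE => /andP[yc yS].
    by rewrite (negbTE yc) (subsetP sU) //= andbT; exact: iS.
  - by apply/indepP => x y; rewrite !inE => /andP[_ xS] /andP[_ yS]; exact: iS.
  - by move: cS; rewrite (cardsD1 c) cS' add1n => -[->].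
case=> B; rewrite !inE => /and3P[sB /indepP iB /eqP cB] ->.
have nB : c \notin B by exact: (contra (subsetP sB c) cW).
rewrite !inE eqxx orTb; split=> //; apply/and3P; split.
- rewrite subUset sub1set cU (subset_trans sB) //; exact: subsetDl.
- apply/indepP => x y; rewrite !inE.
  have hc : forall z, z \in B -> ~~ e c z.
    by move=> z /(subsetP sB); rewrite !inE negb_or => /andP[/andP[_ ->]].
  case/orP=> [/eqP->|xB]; case/orP=> [/eqP->|yB].
  + by rewrite irr.
  + exact: hc.
  + rewrite sym; exact: hc.
  + exact: iB.
- by rewrite cardsU1 nB cB.
Qed.

Lemma dltP N (e : rel 'I_N) (U : {set 'I_N}) :
  reflect (forall x, x \in U -> exists2 y, y \in U & e x y) (dlt e U).
Proof.
apply: (iffP forall_inP) => H x xU.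
  by have /exists_inP := H x xU.
by apply/exists_inP; apply: H.
Qed.

Lemma I_caseB N (e : rel 'I_N) (sym : symmetric e) (irr : irreflexive e)
  (U : {set 'I_N}) c x t : c \in U -> x \in U -> e c x ->
  (forall w, w \in U -> e c w -> w = x) ->
  (forall w, w \in U -> e x w -> w = c) ->
  Ic e U t.+2 = Ic e (U :\: [set c; x]) t.+2 + 2 * Ic e (U :\: [set c; x]) t.+1.
Proof.
move=> cU xU ecx Nc Nx.
have cx : c != x by apply/eqP => E; rewrite E irr in ecx.
have Ec : forall w, w \in U -> e c w = (w == x).
  by move=> w wU; apply/idP/eqP => [/(Nc w wU)|->].
have Ex : forall w, w \in U -> e x w = (w == c).
  by move=> w wU; apply/idP/eqP => [/(Nx w wU)|->]; rewrite // sym.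
rewrite (I_del sym irr t.+1 cU).
have xU' : x \in U :\ c by rewrite !inE eq_sym cx.
rewrite (I_del sym irr t.+1 xU') -addnA.
have -> : U :\ c :\ x = U :\: [set c; x].
  by apply/setP => w; rewrite !inE negb_or; case: (w == c); case: (w == x).
have -> : U :\ c :\: (x |: [set y | e x y]) = U :\: [set c; x].
  apply/setP => w; rewrite !inE; case wU: (w \in U); rewrite ?andbF ?andbT //.
  by rewrite Ex //; case: (w == c); case: (w == x).
have -> : U :\: (c |: [set y | e c y]) = U :\: [set c; x].
  apply/setP => w; rewrite !inE; case wU: (w \in U); rewrite ?andbF ?andbT //.
  by rewrite Ec.
by rewrite addnn -mul2n.
Qed.

Lemma dlt_B N (e : rel 'I_N) (sym : symmetric e)
  (U : {set 'I_N}) c x : dlt e U ->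
  (forall w, w \in U -> e c w -> w = x) ->
  (forall w, w \in U -> e x w -> w = c) ->
  dlt e (U :\: [set c; x]).
Proof.
move=> /dltP d Nc Nx; apply/dltP => z; rewrite !inE negb_or => /andP[/andP[zc zx] zU].
have [w wU ezw] := d z zU.
exists w => //; rewrite !inE wU andbT negb_or; apply/andP; split; apply/eqP => E.
  by move: ezw; rewrite E sym => /(Nc z zU) /eqP; rewrite (negbTE zx).
by move: ezw; rewrite E sym => /(Nx z zU) /eqP; rewrite (negbTE zc).
Qed.

Lemma struct N (e : rel 'I_N) (sym : symmetric e) (U : {set 'I_N}) c :
  dlt e U -> c \in U ->
  (exists c', [/\ c' \in U, (exists2 y, y \in U & e c' y) & dlt e (U :\ c')]) \/
  (exists c' x, [/\ c' \in U, x \in U, e c' x,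
     (forall w, w \in U -> e c' w -> w = x) &
     (forall w, w \in U -> e x w -> w = c')]).
Proof.
move=> dU cU; have /dltP d := dU.
case: (boolP (dlt e (U :\ c))) => H.
  by left; exists c; split => //; apply: d.
move: H => /forall_inPn [x]; rewrite !inE => /andP[xc xU] /exists_inPn Hx.
have Nx : forall w, w \in U -> e x w -> w = c.
  move=> w wU exw; apply/eqP; apply: contraTT exw => wc.
  by apply: Hx; rewrite !inE wc.
have exc : e x c by have [w wU exw] := d x xU; rewrite -(Nx w wU exw).
case: (boolP (dlt e (U :\ x))) => H.
  by left; exists x; split => //; exists c.
move: H => /forall_inPn [z]; rewrite !inE => /andP[zx zU] /exists_inPn Hz.
have Nz : forall w, w \in U -> e z w -> w = x.
  move=> w wU ezw; apply/eqP; apply: contraTT ezw => wx.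
  by apply: Hz; rewrite !inE wx.
have ezx : e z x by have [w wU ezw] := d z zU; rewrite -(Nz w wU ezw).
have zc : z = c by apply: Nx => //; rewrite sym.
right; exists c, x; split => //; first by rewrite sym.
by rewrite -zc.
Qed.

Lemma bin2x i : 2 * 'C(i, 2) = i * i.-1.
Proof.
elim: i => [|i IH] //; rewrite binS bin1 mulnDr IH.
case: i {IH} => [|i] //=; nia.
Qed.

Lemma cardD1' N (U : {set 'I_N}) a : a \in U -> #|U :\ a| = #|U|.-1.
Proof. by move=> aU; rewrite (cardsD1 a U) aU. Qed.

Lemma cardW N (e : rel 'I_N) (irr : irreflexive e) (U : {set 'I_N}) c y :
  c \in U -> y \in U -> e c y ->
  #|U :\: (c |: [set y | e c y])| <= #|U| - 2.
Proof.
move=> cU yU ecy.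
have yc : y != c by apply/eqP => E; rewrite E irr in ecy.
have yU' : y \in U :\ c by rewrite !inE yc.
have -> : #|U| - 2 = #|U :\ c :\ y| by rewrite (cardD1' yU') (cardD1' cU); lia.
apply: subset_leq_card; apply/subsetP => w; rewrite !inE negb_or.
case/andP=> /andP[-> ecw] ->; rewrite ?andbT.
by apply: contraNN ecw => /eqP->.
Qed.

Lemma cardW3 N (e : rel 'I_N) (irr : irreflexive e) (U : {set 'I_N}) c y z :
  c \in U -> y \in U -> z \in U -> e c y -> e c z -> y != z ->
  #|U :\: (c |: [set y | e c y])| <= #|U| - 3.
Proof.
move=> cU yU zU ecy ecz yz.
have yc : y != c by apply/eqP => E; rewrite E irr in ecy.
have zc : z != c by apply/eqP => E; rewrite E irr in ecz.
have yU' : y \in U :\ c by rewrite !inE yc.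
have zU' : z \in U :\ c :\ y by rewrite !inE zc eq_sym yz.
have -> : #|U| - 3 = #|U :\ c :\ y :\ z|.
  by rewrite (cardD1' zU') (cardD1' yU') (cardD1' cU); lia.
apply: subset_leq_card; apply/subsetP => w; rewrite !inE negb_or.
case/andP=> /andP[-> ecw] ->; rewrite !andbT.
by apply/andP; split; apply: contraNN ecw => /eqP->.
Qed.

Lemma I0set N (e : rel 'I_N) (U : {set 'I_N}) t : U = set0 -> 0 < t -> Ic e U t = 0.
Proof.
move=> -> t0; apply/eqP; rewrite -leqn0.
by apply: leq_trans (I_le e set0 t) _; rewrite cards0 bin0n; case: t t0.
Qed.

Lemma dlt_card1 N (e : rel 'I_N) (irr : irreflexive e) (U : {set 'I_N}) :
  dlt e U -> #|U| != 1.
Proof.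
move=> /dltP d; apply/negP => /cards1P [a Ua].
have [y] := d a ltac:(by rewrite Ua inE).
by rewrite Ua inE => /eqP ->; rewrite irr.
Qed.

Lemma I2_le N (e : rel 'I_N) (sym : symmetric e) (irr : irreflexive e) n :
  forall U : {set 'I_N}, #|U| <= n -> dlt e U -> 2 * Ic e U 2 <= #|U| * (#|U| - 2).
Proof.
elim: n => [|n IH] U cUn dU.
  have U0 : U = set0 by apply/eqP; rewrite -cards_eq0 -leqn0.
  by rewrite (I0set e U0).
case: (set_0Vmem U) => [U0|[c cU]]; first by rewrite (I0set e U0).
case: (struct sym dU cU) => [[c' [c'U [y yU ecy] dU']]|[c' [x [c'U xU ecx Nc Nx]]]].
  rewrite (I_del sym irr 1 c'U).
  have h1 := IH (U :\ c') ltac:(rewrite (cardD1' c'U); lia) dU'.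
  rewrite (cardD1' c'U) in h1.
  have h2 := I_le e (U :\: (c' |: [set y | e c' y])) 1.
  rewrite bin1 in h2.
  have h3 := cardW irr c'U yU ecy.
  have h4 : 2 <= #|U|.
    have yc : y != c' by apply/eqP => E; rewrite E irr in ecy.
    by rewrite (cardsD1 c' U) c'U (cardsD1 y) !inE yc yU.
  move: h1 h2 h3 h4; case: #|U| => [|[|j]] //= h1 h2 h3 _.
  case: j h1 h2 h3 => [|j] h1 h2 h3; nia.
rewrite (I_caseB sym irr 0 c'U xU ecx Nc Nx).
have d'' := dlt_B sym dU Nc Nx.
have cx : c' != x by apply/eqP => E; rewrite E irr in ecx.
have hc : #|U :\: [set c'; x]| = #|U| - 2.
  have sab : [set c'; x] \subset U by apply/subsetP => w; rewrite !inE => /orP[]/eqP->.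
  by rewrite cardsD (setIidPr sab) cards2 cx.
have h4 : 2 <= #|U| by rewrite (cardsD1 c' U) c'U (cardsD1 x) !inE eq_sym cx xU.
have h1 := IH (U :\: [set c'; x]) ltac:(rewrite hc; lia) d''.
have h2 := I_le e (U :\: [set c'; x]) 1.
rewrite bin1 hc in h2; rewrite hc in h1.
have h5 := dlt_card1 irr d''; rewrite hc in h5.
move: h1 h2 h4 h5; case: #|U| => [|[|j]] //= h1 h2 _ h5.
case: j h1 h2 h5 => [|[|j]] h1 h2 h5; nia.
Qed.

Lemma main_le N (e : rel 'I_N) (sym : symmetric e) (irr : irreflexive e) n :
  forall U : {set 'I_N}, #|U| <= n -> dlt e U ->
  forall t, 3 <= t -> Ic e U t <= 'C(#|U|.-1, t).
Proof.
elim: n => [|n IH] U cUn dU t t3.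
  have U0 : U = set0 by apply/eqP; rewrite -cards_eq0 -leqn0.
  by rewrite (I0set e U0) //; lia.
case: (set_0Vmem U) => [U0|[c cU]]; first by rewrite (I0set e U0) //; lia.
case: (struct sym dU cU) => [[c' [c'U [y yU ecy] dU']]|[c' [x [c'U xU ecx Nc Nx]]]].
  case: t t3 => [|t'] // t3.
  rewrite (I_del sym irr t' c'U).
  have h1 := IH (U :\ c') ltac:(rewrite (cardD1' c'U); lia) dU' t'.+1 t3.
  rewrite (cardD1' c'U) in h1.
  have h2 := I_le e (U :\: (c' |: [set y | e c' y])) t'.
  have h3 := cardW irr c'U yU ecy.
  have h2' := leq_trans h2 (leq_bin2l t' h3).
  have h4 : 2 <= #|U|.
    have yc : y != c' by apply/eqP => E; rewrite E irr in ecy.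
    by rewrite (cardsD1 c' U) c'U (cardsD1 y) !inE yc yU.
  clear h2 h3; move: h1 h2' h4; case: #|U| => [|[|j]] //= h1 h2 _.
  rewrite binS subn2 /= in h2 *; lia.
have d'' := dlt_B sym dU Nc Nx.
have cx : c' != x by apply/eqP => E; rewrite E irr in ecx.
have hc : #|U :\: [set c'; x]| = #|U| - 2.
  have sab : [set c'; x] \subset U by apply/subsetP => w; rewrite !inE => /orP[]/eqP->.
  by rewrite cardsD (setIidPr sab) cards2 cx.
have h4 : 2 <= #|U| by rewrite (cardsD1 c' U) c'U (cardsD1 x) !inE eq_sym cx xU.
have hU : #|U :\: [set c'; x]| <= n by rewrite hc; lia.
case: t t3 => [|[|s]] // t3.
rewrite (I_caseB sym irr s c'U xU ecx Nc Nx).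
have h1 := IH _ hU d'' s.+2 t3.
rewrite hc in h1.
case: s t3 h1 => [|[|s]] // _ h1.
  have h2 := I2_le sym irr hU d''; rewrite hc in h2.
  move: h1 h2 h4; case: #|U| => [|[|j]] //= h1 h2 _.
  rewrite subn2 /= in h1 h2 *.
  case: j h1 h2 => [|j] h1 h2; first by move: h1 h2; rewrite !bin0n /=; lia.
  rewrite /= !binS in h1 *.
  have := bin2x j; rewrite bin1; case: j h1 h2 => [|j] h1 h2 /=; nia.
have h2 := IH _ hU d'' s.+3 isT; rewrite hc in h2.
move: h1 h2 h4; case: #|U| => [|[|j]] //= h1 h2 _.
rewrite subn2 /= in h1 h2 *.
case: j h1 h2 => [|j] h1 h2; first by move: h1 h2; rewrite !bin0n /=; lia.
rewrite /= !binS in h1 h2 *; lia.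
Qed.

Lemma S1 N (e : rel 'I_N) (sym : symmetric e) (irr : irreflexive e)
  (U : {set 'I_N}) c y z t : c \in U -> y \in U -> z \in U -> e c y -> e c z ->
  y != z -> dlt e (U :\ c) -> 3 <= t <= #|U|.-1 -> Ic e U t < 'C(#|U|.-1, t).
Proof.
move=> cU yU zU ecy ecz yz dU' /andP[t3 tk].
case: t t3 tk => [|t'] // t3 tk.
rewrite (I_del sym irr t' cU).
have h1 := main_le sym irr (leqnn _) dU' t3.
rewrite (cardD1' cU) in h1.
have h3 := cardW3 irr cU yU zU ecy ecz yz.
have h2 := leq_trans (I_le e (U :\: (c |: [set y | e c y])) t') (leq_bin2l t' h3).
clear h3; move: h1 h2 tk; case: #|U| => [|[|[|j]]] /= h1 h2 tk; try lia.
rewrite (_ : j.+3 - 3 = j) in h2; last by lia.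
case: t' t3 h1 h2 tk => [|[|u]] // _ h1 h2 tk.
rewrite !binS in h1 h2 *.
have : 0 < 'C(j, u.+1) by rewrite bin_gt0; lia.
lia.
Qed.

Lemma arithT a k : 3 <= a.+1 -> a.+1 <= k.-1 -> 2 <= a <= k - 2.
Proof. lia. Qed.
Lemma arithK a k : 3 <= a.+1 -> a.+1 <= k.-1 -> 2 <= k.
Proof. lia. Qed.

Lemma arithS2 k t' A B : A <= 'C(k.-1.-1, t'.+1) -> B < 'C(k - 2, t') -> 2 <= k ->
  A + B < 'C(k.-1, t'.+1).
Proof.
case: k => [|[|j]] //= h1 h2 _; rewrite binS.
rewrite (_ : j.+2 - 2 = j) in h2; last by lia.
lia.
Qed.

Definition star_at N (e : rel 'I_N) (U : {set 'I_N}) c :=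
  [forall a in U, forall b in U, e a b == ((a != b) && ((a == c) || (b == c)))].

Lemma S2 N (e : rel 'I_N) (sym : symmetric e) (irr : irreflexive e)
  (U : {set 'I_N}) c y z t : c \in U -> y \in U -> z \in U -> e c y ->
  (forall w, w \in U -> e c w -> w = y) -> e y z -> z != c ->
  ~~ star_at e U y -> dlt e U ->
  3 <= t <= #|U|.-1 -> Ic e U t < 'C(#|U|.-1, t).
Proof.
move=> cU yU zU ecy Nc eyz zc nst dU /andP[t3 tk].
have /dltP d := dU.
have yc : y != c by apply/eqP => E; rewrite E irr in ecy.
have Ec : forall w, w \in U -> e c w = (w == y).
  by move=> w wU; apply/idP/eqP => [/(Nc w wU)|->].
have WE : U :\: (c |: [set w | e c w]) = U :\: [set c; y].
  apply/setP => w; rewrite !inE; case wU: (w \in U); rewrite ?andbF ?andbT //.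
  by rewrite Ec.
have dU' : dlt e (U :\ c).
  apply/dltP => v; rewrite !inE => /andP[vc vU].
  have [w wU evw] := d v vU.
  case: (eqVneq w c) => [wc|wc].
    move: evw; rewrite wc sym Ec // => /eqP vy.
    by exists z; rewrite ?vy // !inE zc zU.
  by exists w; rewrite // !inE wc wU.
have [a [b [aW bW eab]]] : exists a b, [/\ a \in U :\: [set c; y],
    b \in U :\: [set c; y] & e a b].
  move: nst => /forall_inPn [a aU /forall_inPn [b bU H]].
  have nc : forall v w, w \in U -> e v w -> w != y -> v != c.
    move=> v w wU evw wy; apply/eqP => vc; move: evw; rewrite vc Ec //.
    by rewrite (negbTE wy).
  case eab: (e a b); move: H; rewrite eab.
    have ab : a != b by apply/eqP => E; rewrite E irr in eab.
    rewrite ab /= negb_or => /andP[ay by'].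
    exists a, b; split => //; rewrite !inE negb_or ?aU ?bU ?ay ?by' ?andbT.
      by rewrite (nc a b bU eab by').
    by rewrite (nc b a aU ltac:(by rewrite sym) ay).
  rewrite eq_sym eqbF_neg negbK => /andP[ab ayb].
  have [v [vU vy nyv]] : exists v, [/\ v \in U, v != y & ~~ e y v].
    case/orP: ayb => /eqP E.
      by exists b; split => //; [rewrite -E eq_sym | rewrite -E eab].
    by exists a; split => //; [rewrite -E | rewrite -E sym eab].
  have [w wU evw] := d v vU.
  have wy : w != y by apply: contraNN nyv => /eqP <-; rewrite sym.
  exists v, w; split => //; rewrite !inE negb_or ?vU ?wU ?vy ?wy ?andbT.
    by apply: contraNN nyv => /eqP->; rewrite sym.
  by rewrite (nc w v vU ltac:(by rewrite sym) vy).
case: t t3 tk => [|t'] // t3 tk.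
rewrite (I_del sym irr t' cU) WE.
have h1 := main_le sym irr (leqnn _) dU' t3.
rewrite (cardD1' cU) in h1.
have sab : [set c; y] \subset U by apply/subsetP => w; rewrite !inE => /orP[]/eqP->.
have hc : #|U :\: [set c; y]| = #|U| - 2.
  by rewrite cardsD (setIidPr sab) cards2 eq_sym yc.
have h2 := I_lt irr (t := t') aW bW eab.
rewrite hc in h2.
have h2' := h2 (arithT t3 tk).
exact: (arithS2 h1 h2' (arithK t3 tk)).
Qed.

Lemma arithS3a j A B : A <= 'C(j.-1, 3) -> 2 * B <= j * (j - 2) -> 2 <= j ->
  A + 2 * B < 'C(j.+1, 3).
Proof.
case: j => [|[|i]] //= h1 h2 _; rewrite !binS.
have := bin2x i.+1; rewrite bin1 /= => h3.
rewrite !binS bin1 in h1 h3 *.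
rewrite ?bin0 ?bin1 in h1 h3 *. nia.
Qed.

Lemma arithS3b j u A B : A <= 'C(j.-1, u.+4) -> B <= 'C(j.-1, u.+3) ->
  u.+4 <= j.+1 -> A + 2 * B < 'C(j.+1, u.+4).
Proof.
case: j => [|i] //= h1 h2 h3; rewrite !binS.
have : 0 < 'C(i, u.+2) by rewrite bin_gt0; lia.
lia.
Qed.

Lemma arithP k : 4 <= k -> k.-1 = (k - 2).+1 /\ 2 <= k - 2.
Proof. lia. Qed.

Lemma S3 N (e : rel 'I_N) (sym : symmetric e) (irr : irreflexive e)
  (U : {set 'I_N}) c x t : c \in U -> x \in U -> e c x ->
  (forall w, w \in U -> e c w -> w = x) ->
  (forall w, w \in U -> e x w -> w = c) -> dlt e U -> 4 <= #|U| ->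
  3 <= t <= #|U|.-1 -> Ic e U t < 'C(#|U|.-1, t).
Proof.
move=> cU xU ecx Nc Nx dU k4 /andP[t3 tk].
have d'' := dlt_B sym dU Nc Nx.
have cx : c != x by apply/eqP => E; rewrite E irr in ecx.
have hc : #|U :\: [set c; x]| = #|U| - 2.
  have sab : [set c; x] \subset U by apply/subsetP => w; rewrite !inE => /orP[]/eqP->.
  by rewrite cardsD (setIidPr sab) cards2 cx.
have [hk hj] := arithP k4.
rewrite hk -hc in tk *; rewrite -hc in hj.
case: t t3 tk => [|[|s]] // t3 tk.
rewrite (I_caseB sym irr s cU xU ecx Nc Nx).
have h1 := main_le sym irr (leqnn _) d'' t3.
case: s t3 tk h1 => [|[|u]] // _ tk h1.
  exact: arithS3a h1 (I2_le sym irr (leqnn _) d'') hj.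
exact: arithS3b h1 (main_le sym irr (leqnn _) d'' (isT : 3 <= u.+3)) tk.
Qed.

Lemma strict N (e : rel 'I_N) (sym : symmetric e) (irr : irreflexive e)
  (U : {set 'I_N}) t : dlt e U -> 4 <= #|U| -> 3 <= t <= #|U|.-1 ->
  (forall c, c \in U -> ~~ star_at e U c) -> Ic e U t < 'C(#|U|.-1, t).
Proof.
move=> dU k4 tb nst; have /dltP d := dU.
have [c0 c0U] : exists c0, c0 \in U.
  by apply/set0Pn; rewrite -card_gt0; apply: leq_trans k4.
have [y yU ecy] := d c0 c0U.
case: (boolP [exists w in U, e c0 w && (w != y)]).
  case/exists_inP => w wU /andP[ecw wy].
  case: (boolP (dlt e (U :\ c0))) => H.
    by apply: (S1 sym irr c0U yU wU ecy ecw _ H tb); rewrite eq_sym.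
  move: H => /forall_inPn [x]; rewrite !inE => /andP[xc xU] /exists_inPn Hx.
  have Nx : forall w, w \in U -> e x w -> w = c0.
    move=> v vU exv; apply/eqP; apply: contraTT exv => vc.
    by apply: Hx; rewrite !inE vc.
  have exc : e x c0 by have [v vU exv] := d x xU; rewrite -(Nx v vU exv).
  case: (eqVneq x y) => [xy|xy].
    apply: (S2 sym irr xU c0U wU exc Nx ecw _ (nst c0 c0U) dU tb).
    by rewrite xy.
  by apply: (S2 sym irr xU c0U yU exc Nx ecy _ (nst c0 c0U) dU tb); rewrite eq_sym.
move/exists_inPn => Hc.
have Nc : forall w, w \in U -> e c0 w -> w = y.
  move=> w wU ecw; apply/eqP; have := Hc w wU; rewrite ecw /=.
  by rewrite negbK.
case: (boolP [exists w in U, e y w && (w != c0)]).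
  case/exists_inP => w wU /andP[eyw wc].
  exact: (S2 sym irr c0U yU wU ecy Nc eyw wc (nst y yU) dU tb).
move/exists_inPn => Hy.
have Ny : forall w, w \in U -> e y w -> w = c0.
  move=> w wU eyw; apply/eqP; have := Hy w wU; rewrite eyw /=.
  by rewrite negbK.
exact: (S3 sym irr c0U yU ecy Nc Ny dU k4 tb).
Qed.

Lemma star_count m t : 2 <= t -> indep_count (@star_rel m) t = 'C(m, t).
Proof.
move=> t2.
have -> : 'C(m, t) = 'C(#|[set: 'I_m.+1] :\ ord0|, t).
  by rewrite (cardD1' (in_setT _)) cardsT card_ord.
rewrite -cards_draws /indep_count; apply: eq_card => S; rewrite !inE.
case cS: (#|S| == t); rewrite ?andbF ?andbT //.
apply/idP/idP.
  move=> /indepP iS; apply/subsetP => x xS; rewrite !inE andbT.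
  apply/eqP => x0; move: xS; rewrite x0 => S0.
  have : 0 < #|S :\ ord0| by rewrite (cardD1' S0) (eqP cS); lia.
  rewrite card_gt0 => /set0Pn [y]; rewrite !inE => /andP[y0 yS].
  by have := iS ord0 y S0 yS; rewrite /star_rel eq_sym y0 eqxx.
move=> /subsetP sS; apply/indepP => x y xS yS.
have := sS x xS; have := sS y yS; rewrite !inE !andbT /star_rel.
by move=> /negbTE-> /negbTE->; rewrite andbF.
Qed.

Lemma iso_of_star m (e : rel 'I_m.+1) c :
  star_at e [set: 'I_m.+1] c -> graph_iso e (@star_rel m).
Proof.
move=> st; exists (tperm c ord0); split.
  by exists (tperm c ord0) => z; rewrite tpermK.
have h0 : forall z, (tperm c ord0 z == ord0) = (z == c).
  by move=> z; rewrite -(inj_eq (@perm_inj _ (tperm c ord0)) z c) tpermL.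
move=> x y; rewrite /star_rel (inj_eq (@perm_inj _ _)) !h0.
by have /forall_inP/(_ x (in_setT x))/forall_inP/(_ y (in_setT y))/eqP := st.
Qed.
Unset Implicit Arguments.

Theorem mainTheorem6 (m t : nat) (e : rel 'I_m.+1) :
  4 <= m.+1 -> 3 <= t <= m ->
  simple_graph e ->
  (forall v, 1 <= degree e v) ->
  ~ graph_iso e (@star_rel m) ->
  indep_count e t < indep_count (@star_rel m) t.
Proof.
move=> n4 tb [sym irr] deg niso.
have t2 : 2 <= t by case/andP: tb => h _; apply: ltnW.
rewrite star_count //.
have -> : indep_count e t = Ic e [set: 'I_m.+1] t.
  by apply: eq_card => S; rewrite !inE subsetT.
have cT : #|[set: 'I_m.+1]| = m.+1 by rewrite cardsT card_ord.
have := @strict _ e sym irr [set: 'I_m.+1] t; rewrite cT /=; apply => //.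
  apply/dltP => v _; have := deg v; rewrite /degree card_gt0 => /set0Pn [w].
  by rewrite inE => ew; exists w; rewrite ?in_setT.
by move=> c _; apply/negP => /iso_of_star.
Qed.
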